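(* Let $H:\mathbb{R}^n\to\mathbb{R}$ be $\mu_H$-strongly convex with $\mu_H>0$, let $f^i_{j_i}:\mathbb{R}^n\to\mathbb{R}$ ($i\in[S]$, $j_i\in[I_i]$) be convex, and let $X\subset\mathbb{R}^n$ be nonempty, compact and convex. Let $m:=\sum_{i=1}^S I_i$, $F:=\sum_{i=1}^S\sum_{j_i=1}^{I_i} f^i_{j_i}$, and let $x^*_H$ be the unique solution of the bilevel problem: minimize $H(x)$ subject to $x\in\operatorname{argmin}_{y\in X}F(y)$. Let $\{\gamma_k\}_{k=1}^\infty$, $\{\lambda_k\}_{k=1}^\infty$ satisfy: (i) both are nonincreasing sequences of positive reals with $\gamma_1\lambda_1\mu_H\le 2m$; (ii) $\sum_{k=1}^\infty\gamma_k\lambda_k=\infty$, $\sum_{k=1}^\infty\frac{1}{\gamma_{k+1}\lambda_{k+1}}\big(1-\frac{\lambda_k}{\lambda_{k+1}}\big)^2<\infty$, and $\sum_{k=1}^\infty\gamma_k^2<\infty$; (iii) $\frac{1}{\gamma_{k+1}^2\lambda_{k+1}^2}\big(1-\frac{\lambda_k}{\lambda_{k+1}}\big)^2\to0$, $\frac{\gamma_k}{\lambda_k}\to0$, and $\lambda_k\to0$. Let $\{x_k\}_{k=1}^\infty$ be a sequence generated by FISM (described in the context) with these stepsizes. Then $\{x_k\}_{k=1}^\infty$ converges to $x^*_H$.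
   Context: Notation: $[s]:=\{1,\dots,s\}$; $P_X$ is the Euclidean metric projection onto $X$; $\partial$ denotes the convex subdifferential. FISM (Federated Incremental Subgradient Method): given a starting point $x_1\in\mathbb{R}^n$ and positive stepsizes $\{\gamma_k\},\{\lambda_k\}$, for $k=1,2,\dots$: pick $\mathcal{H}_k\in\partial H(x_k)$; for every client $i\in[S]$ set $x^i_{k,1}=x_k$ and for $j_i=1,\dots,I_i$ pick $g^i_{k,j_i}\in\partial f^i_{j_i}(x^i_{k,j_i})$ and set $x^i_{k,j_i+1}=P_X\big[x^i_{k,j_i}-\gamma_k g^i_{k,j_i}-\frac{\gamma_k\lambda_k}{m}\mathcal{H}_k\big]$; then set $x^i_k=x^i_{k,I_i+1}$ and $x_{k+1}=\frac1S\sum_{i=1}^S x^i_k$. *)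

(* Defs.v *)
From HB Require Import structures.
From mathcomp Require Import all_boot all_order all_algebra.
From mathcomp Require Import all_classical all_reals all_analysis.
Set Implicit Arguments. Unset Strict Implicit. Unset Printing Implicit Defensive.
Import Order.TTheory GRing.Theory Num.Theory.
Import numFieldNormedType.Exports.
Local Open Scope classical_set_scope.
Local Open Scope ring_scope.

Section Defs.
Variables (R : realType) (n : nat).
Notation vec := 'rV[R]_n.

Definition dotv (u v : vec) : R := \sum_(j < n) u ord0 j * v ord0 j.
Definition sqnorm (u : vec) : R := dotv u u.

Definition convex_set_v (X : set vec) : Prop :=
  forall x y (t : R), X x -> X y -> 0 <= t <= 1 -> X (t *: x + (1 - t) *: y).

Definition convex_fun (f : vec -> R) : Prop :=
  forall x y (t : R), 0 <= t <= 1 ->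
    f (t *: x + (1 - t) *: y) <= t * f x + (1 - t) * f y.

Definition strongly_convex (mu : R) (f : vec -> R) : Prop :=
  forall x y (t : R), 0 <= t <= 1 ->
    f (t *: x + (1 - t) *: y)
      <= t * f x + (1 - t) * f y - mu / 2 * t * (1 - t) * sqnorm (x - y).

Definition subgrad (f : vec -> R) (x g : vec) : Prop :=
  forall y, f x + dotv g (y - x) <= f y.

Definition is_proj (X : set vec) (z p : vec) : Prop :=
  X p /\ forall y, X y -> sqnorm (z - p) <= sqnorm (z - y).

Definition argmin_on (X : set vec) (F : vec -> R) (x : vec) : Prop :=
  X x /\ forall y, X y -> F x <= F y.

Definition bilevel_solution (X : set vec) (F H : vec -> R) (x : vec) : Prop :=
  argmin_on [set y | argmin_on X F y] H x.

(* {x_k} (indexed from 0, x 0 = x_1) is generated by FISM with stepsizes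
   gamma, lambda (gamma k = gamma_{k+1}, lambda k = lambda_{k+1}), clients
   i : 'I_S with component functions f i j, j < I i (j = j_i - 1).
   Hk k = \mathcal H_k, g k i j = g^i_{k,j+1}, y k i j = x^i_{k,j+1}. *)
Definition FISM_sequence (S : nat) (I : 'I_S -> nat)
    (f : 'I_S -> nat -> vec -> R) (H : vec -> R) (X : set vec)
    (gamma lambda : nat -> R) (x : nat -> vec) : Prop :=
  let m : R := (\sum_(i < S) I i)%:R in
  exists (Hk : nat -> vec) (g y : nat -> 'I_S -> nat -> vec),
    forall k,
      subgrad H (x k) (Hk k) /\
      (forall i, y k i 0%N = x k) /\
      (forall i (j : nat), (j < I i)%N ->
          subgrad (f i j) (y k i j) (g k i j) /\
          is_proj X (y k i j - gamma k *: g k i j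
                      - (gamma k * lambda k / m) *: Hk k) (y k i j.+1)) /\
      x k.+1 = S%:R^-1 *: \sum_(i < S) y k i (I i).

End Defs.

(* Main.v *)
Require Import Defs.
From HB Require Import structures.
From mathcomp Require Import all_boot all_order all_algebra.
From mathcomp Require Import all_classical all_reals all_analysis.
From mathcomp Require Import ring lra.
Import Order.TTheory GRing.Theory Num.Theory.
Import numFieldNormedType.Exports.
Local Open Scope classical_set_scope.
Local Open Scope ring_scope.
Set Implicit Arguments. Unset Strict Implicit. Unset Printing Implicit Defensive.
Section S.
Variables (R : realType) (n : nat).
Notation vec := 'rV[R]_n.
Implicit Types (u v w : vec).

Lemma dotvDl u v w : dotv (u + v) w = dotv u w + dotv v w.
Proof. by rewrite /dotv -big_split; apply: eq_bigr => j _; rewrite !mxE mulrDl. Qed.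
Lemma dotvC u v : dotv u v = dotv v u.
Proof. by apply: eq_bigr => j _; rewrite mulrC. Qed.
Lemma dotvDr u v w : dotv u (v + w) = dotv u v + dotv u w.
Proof. by rewrite dotvC dotvDl !(dotvC u). Qed.
Lemma dotvZl a u v : dotv (a *: u) v = a * dotv u v.
Proof. by rewrite /dotv mulr_sumr; apply: eq_bigr => j _; rewrite !mxE mulrA. Qed.
Lemma dotvZr a u v : dotv u (a *: v) = a * dotv u v.
Proof. by rewrite dotvC dotvZl dotvC. Qed.
Lemma dotvNl u v : dotv (- u) v = - dotv u v.
Proof. by rewrite -scaleN1r dotvZl mulN1r. Qed.
Lemma dotvNr u v : dotv u (- v) = - dotv u v.
Proof. by rewrite dotvC dotvNl dotvC. Qed.
Lemma dotvBl u v w : dotv (u - v) w = dotv u w - dotv v w.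
Proof. by rewrite dotvDl dotvNl. Qed.
Lemma dotvBr u v w : dotv u (v - w) = dotv u v - dotv u w.
Proof. by rewrite dotvDr dotvNr. Qed.

Lemma sqnorm_ge0 u : 0 <= sqnorm u.
Proof. by apply: sumr_ge0 => j _; rewrite -expr2 sqr_ge0. Qed.
Lemma sqnormD u v : sqnorm (u + v) = sqnorm u + 2 * dotv u v + sqnorm v.
Proof. rewrite /sqnorm !dotvDl !dotvDr (dotvC v u). ring. Qed.
Lemma sqnormB u v : sqnorm (u - v) = sqnorm u - 2 * dotv u v + sqnorm v.
Proof. rewrite sqnormD /sqnorm dotvNr dotvNl dotvNr opprK. ring. Qed.
Lemma sqnormN u : sqnorm (- u) = sqnorm u.
Proof. by rewrite /sqnorm dotvNl dotvNr opprK. Qed.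
Lemma sqnormZ a u : sqnorm (a *: u) = a ^+ 2 * sqnorm u.
Proof. rewrite /sqnorm dotvZl dotvZr. ring. Qed.
Lemma sqnormC u v : sqnorm (u - v) = sqnorm (v - u).
Proof. by rewrite -sqnormN opprB. Qed.
Lemma young u v : 2 * dotv u v <= sqnorm u + sqnorm v.
Proof. have := sqnorm_ge0 (u - v); rewrite sqnormB; lra. Qed.
Lemma young' u v : - (sqnorm u + sqnorm v) <= 2 * dotv u v.
Proof. have := sqnorm_ge0 (u + v); rewrite sqnormD; lra. Qed.
Lemma sqnormD2 u v : sqnorm (u + v) <= 2 * sqnorm u + 2 * sqnorm v.
Proof. rewrite sqnormD; have := young u v; lra. Qed.

Lemma coord_le u j : u ord0 j ^+ 2 <= sqnorm u.
Proof.
rewrite /sqnorm /dotv (bigD1 j) //= expr2 lerDl.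
by apply: sumr_ge0 => i _; rewrite -expr2 sqr_ge0.
Qed.

Lemma N1 (v : vec) j : `|v ord0 j| <= `|v|.
Proof.
have /mapP[j' Hj ->] : `|v ord0 j| \in [seq `|v x.1 x.2| | x : 'I_1 * 'I_n].
  by apply/mapP; exists (ord0, j) => //=; rewrite mem_enum.
by rewrite [leRHS]/Num.Def.normr /= mx_normrE; apply/bigmax_geP; right => /=; exists j'.
Qed.
Lemma N4 (v : vec) e : 0 <= e -> (forall j, `|v ord0 j| <= e) -> `|v| <= e.
Proof.
move=> e0 H; rewrite /Num.Def.normr /= mx_normrE; apply: bigmax_le => // -[i j] _ /=.
by rewrite (ord1 i).
Qed.
Lemma N2 (v : vec) : `|v| ^+ 2 <= sqnorm v.
Proof.
have [Hz|] := eqVneq (mx_norm v) 0.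
  have -> : `|v| = 0 by exact: Hz.
  by rewrite expr0n /= sqnorm_ge0.
move=> /mx_norm_neq0 [[i j] /= Hn].
have -> : `|v| = `|v i j| by exact: Hn.
by rewrite real_normK ?num_real // (ord1 i) coord_le.
Qed.
Lemma N3 (v : vec) : sqnorm v <= n%:R * `|v| ^+ 2.
Proof.
rewrite /sqnorm /dotv.
have -> : n%:R * `|v| ^+ 2 = \sum_(j < n) `|v| ^+ 2 by rewrite sumr_const card_ord mulr_natl.
apply: ler_sum => j _; rewrite -expr2 -real_normK ?num_real //.
by rewrite lerXn2r ?nnegrE ?normr_ge0 // N1.
Qed.
Lemma sqnorm_eq0 v : sqnorm v = 0 -> v = 0.
Proof.
move=> H; apply/rowP => j; rewrite mxE.
have := coord_le v j; rewrite H => /(le_trans _) h.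
have : v ord0 j ^+ 2 = 0 by apply/eqP; rewrite eq_le h ?sqr_ge0.
by move/eqP; rewrite expf_eq0 /= => /eqP.
Qed.

Lemma proj_le (X : set vec) z p w : convex_set_v X -> is_proj X z p -> X w ->
  sqnorm (p - w) <= sqnorm (z - w).
Proof.
move=> cX [Xp pmin] Xw.
set d := dotv (z - p) (w - p); set s := sqnorm (w - p).
have s0 : 0 <= s by apply: sqnorm_ge0.
have dE : d = dotv (z - p) (w - p) by [].
have sE : s = sqnorm (w - p) by [].
clearbody d s.
have key : forall t, 0 < t -> t <= 1 -> 2 * d <= t * s.
  move=> t t0 t1.
  have Xy := cX w p t Xw Xp (ltac:(by rewrite (ltW t0) t1)).
  have := pmin _ Xy.
  have -> : z - (t *: w + (1 - t) *: p) = (z - p) - t *: (w - p).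
    by apply/rowP => j; rewrite !mxE; ring.
  rewrite (sqnormB (z - p)) sqnormZ dotvZr -dE -sE => h.
  have h2 : t * (2 * d) <= t * (t * s) by lra.
  by rewrite -(ler_pM2l t0).
have dle : d <= 0.
  rewrite leNgt; apply/negP => d0.
  have ds0 : 0 < d + s by lra.
  have t0 : 0 < d / (d + s) by apply: divr_gt0.
  have t1 : d / (d + s) <= 1 by rewrite ler_pdivrMr // mul1r; lra.
  have := key _ t0 t1.
  have : d / (d + s) * s <= d.
    rewrite mulrAC ler_pdivrMr //; nra.
  move=> h3 h4; lra.
have -> : z - w = (z - p) - (w - p) by apply/rowP => j; rewrite !mxE; ring.
rewrite (sqnormB (z - p)) -dE (sqnormC p) -sE; have := sqnorm_ge0 (z - p); lra.
Qed.

Definition incube (M : R) (v : vec) := forall j, `|v ord0 j| <= M.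

Lemma seg_bound (f : vec -> R) (e : vec) (A t : R) : convex_fun f -> 0 < A -> `|t| <= A ->
  f (t *: e) <= Num.max (f (A *: e)) (f ((- A) *: e)).
Proof.
move=> cf A0; rewrite ler_norml => /andP[t1 t2].
set s := (t + A) / (2 * A).
have s0 : 0 <= s by apply: divr_ge0; lra.
have s1 : s <= 1 by rewrite /s ler_pdivrMr ?mul1r; lra.
have -> : t *: e = s *: (A *: e) + (1 - s) *: ((- A) *: e).
  apply/rowP => j; rewrite !mxE /s; field; lra.
have hc := cf (A *: e) ((- A) *: e) s (ltac:(by rewrite s0 s1)).
apply: le_trans hc _.
have h1 : f (A *: e) <= Num.max (f (A *: e)) (f ((- A) *: e)) by rewrite le_max lexx.
have h2 : f ((- A) *: e) <= Num.max (f (A *: e)) (f ((- A) *: e)) by rewrite le_max lexx orbT.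
nra.
Qed.

Lemma cube_ub_aux (f : vec -> R) : convex_fun f -> forall k (M : R), 0 < M ->
  exists B, forall v : vec, (forall j : 'I_n, (k <= j)%N -> v ord0 j = 0) ->
    incube M v -> f v <= B.
Proof.
move=> cf; elim=> [|k IH] M M0.
  exists (f 0) => v hv _.
  have -> : v = 0 by apply/rowP => j; rewrite mxE; apply: hv.
  by [].
have M20 : 0 < 2 * M by rewrite mulr_gt0.
have [B1 HB1] := IH _ M20.
case: (ltnP k n) => hk; last first.
  have [B0 HB0] := IH _ M0.
  exists B0 => v _ hM; apply: HB0 => // j hj.
  by have := ltn_ord j; rewrite ltnNge (leq_trans hk hj).
set jk : 'I_n := Ordinal hk.
set e : vec := \row_j ((j == jk)%:R).
set B2 := Num.max (f ((2 * M) *: e)) (f ((- (2 * M)) *: e)).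
exists ((B1 + B2) / 2) => v hv hM.
set v' : vec := \row_j (if (j < k)%N then v ord0 j else 0).
have -> : v = (1/2) *: (2 *: v') + (1 - 1/2) *: ((2 * v ord0 jk) *: e).
  apply/rowP => j; rewrite !mxE.
  case: (ltnP j k) => hj.
    have -> : (j == jk) = false.
      by apply/negbTE/eqP => /(congr1 val) /= hh; move: hj; rewrite hh ltnn.
    by rewrite /=; field.
  case: (eqVneq j jk) => [->|hne] /=.
    by field.
  have : (k.+1 <= j)%N.
    rewrite ltn_neqAle hj andbT; apply/negP => /eqP hh.
    by move: hne; apply/negP; rewrite negbK; apply/eqP/val_inj.
  by move=> /hv ->; field.
have hc := cf (2 *: v') ((2 * v ord0 jk) *: e) (1/2) (ltac:(apply/andP; split; lra)).
apply: le_trans hc _.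
have h1 : f (2 *: v') <= B1.
  apply: HB1.
    by move=> j hj; rewrite !mxE ltnNge hj /= mulr0.
  move=> j; rewrite !mxE; case: ifP => _; last by rewrite mulr0 normr0; lra.
  by rewrite normrM ger0_norm // ler_pM2l //.
have h2 : f ((2 * v ord0 jk) *: e) <= B2.
  apply: seg_bound => //.
  by rewrite normrM ger0_norm // ler_pM2l //.
lra.
Qed.

Lemma cube_ub (f : vec -> R) : convex_fun f -> forall M,
  exists B, forall v : vec, incube M v -> f v <= B.
Proof.
move=> cf M.
have M0 : 0 < `|M| + 1 by have := normr_ge0 M; lra.
have [B HB] := cube_ub_aux cf n M0.
exists B => v hv; apply: HB.
  by move=> j hj; have := ltn_ord j; rewrite ltnNge hj.
move=> j; apply: le_trans (hv j) _; have := ler_norm M; lra.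
Qed.

Lemma cube_lb (f : vec -> R) : convex_fun f -> forall M,
  exists B, forall v : vec, incube M v -> B <= f v.
Proof.
move=> cf M; have [B HB] := cube_ub cf M.
exists (2 * f 0 - B) => v hv.
have hc := cf v (- v) (1/2) (ltac:(apply/andP; split; lra)).
have e0 : (1/2) *: v + (1 - 1/2) *: (- v) = 0 by apply/rowP => j; rewrite !mxE; field.
rewrite e0 in hc.
have : f (- v) <= B by apply: HB => j; rewrite mxE normrN.
move: hc; lra.
Qed.

Lemma incube0 (M : R) : incube (`|M| + 1) 0.
Proof. move=> j; rewrite mxE normr0; have := normr_ge0 M; lra. Qed.

Lemma incube_wid (M : R) v : incube M v -> incube (`|M| + 1) v.
Proof. move=> h j; apply: le_trans (h j) _; have := ler_norm M; lra. Qed.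

Lemma incube_shift (M : R) (y u : vec) : incube M y -> `|u| <= 1 -> incube (`|M| + 1) (y + u).
Proof.
move=> hy hu j; rewrite mxE; apply: le_trans (ler_normD _ _) _.
have := hy j; have := N1 u j; have := ler_norm M; lra.
Qed.

Lemma lip (f : vec -> R) : convex_fun f -> forall M, exists L, 0 <= L /\
  forall x y, incube M x -> incube M y -> f y - f x <= L * `|y - x|.
Proof.
move=> cf M.
have [U HU] := cube_ub cf (`|M| + 1).
have [Lo HLo] := cube_lb cf (`|M| + 1).
have UL : Lo <= U by apply: le_trans (HLo _ (incube0 M)) (HU _ (incube0 M)).
exists (U - Lo); split; first by lra.
move=> x y hx hy.
have [hd|hd] := eqVneq (y - x) 0.
  by rewrite hd normr0 mulr0 (subr0_eq hd) subrr.
have d0 : 0 < `|y - x| by rewrite normr_gt0.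
move: d0; set d := `|y - x| => d0.
have hdj : forall j, `|(y - x) ord0 j| <= d by move=> j; apply: N1.
set z := y + d^-1 *: (y - x).
have hz : incube (`|M| + 1) z.
  apply: incube_shift => //; rewrite normrZ ger0_norm ?invr_ge0 ?(ltW d0) //.
  by rewrite mulVf ?gt_eqF.
set s := d / (1 + d).
have s0 : 0 <= s by apply: divr_ge0; lra.
have s1 : s <= 1 by rewrite /s ler_pdivrMr ?mul1r; lra.
have sd : s <= d by rewrite /s ler_pdivrMr; nra.
have ey : y = s *: z + (1 - s) *: x.
  apply/rowP => j; rewrite /z /s !mxE; field; lra.
have hc := cf z x s (ltac:(by rewrite s0 s1)).
rewrite -ey in hc.
have := HU _ hz; have := HLo _ (incube_wid hx).
nra.
Qed.

Lemma sqnorm0 : sqnorm (0 : vec) = 0.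
Proof. by rewrite /sqnorm /dotv big1 // => j _; rewrite mxE mul0r. Qed.

Lemma sg_bound (f : vec -> R) : convex_fun f -> forall M, exists G, 0 <= G /\
  forall y g, incube M y -> subgrad f y g -> sqnorm g <= G.
Proof.
move=> cf M.
have [U HU] := cube_ub cf (`|M| + 1).
have [Lo HLo] := cube_lb cf (`|M| + 1).
have UL : Lo <= U by apply: le_trans (HLo _ (incube0 M)) (HU _ (incube0 M)).
exists (n%:R * (U - Lo) ^+ 2); split.
  by apply: mulr_ge0; [apply: ler0n | apply: sqr_ge0].
move=> y g hy sg.
have [->|hg] := eqVneq g 0.
  by rewrite sqnorm0; apply: mulr_ge0; [apply: ler0n | apply: sqr_ge0].
have d0 : 0 < `|g| by rewrite normr_gt0.
move: d0; set d := `|g| => d0.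
have hN2 : d * d <= sqnorm g by rewrite -expr2; apply: N2.
set u := d^-1 *: g.
have hu : incube (`|M| + 1) (y + u).
  apply: incube_shift => //; rewrite normrZ ger0_norm ?invr_ge0 ?(ltW d0) //.
  by rewrite mulVf ?gt_eqF.
have := sg (y + u).
have -> : y + u - y = u by apply/rowP => j; rewrite !mxE; ring.
rewrite /u dotvZr -/(sqnorm g) => h.
have hd : d <= d^-1 * sqnorm g by rewrite mulrC ler_pdivlMr.
have := HU _ hu; have := HLo _ (incube_wid hy) => h1 h2.
have dUL : d <= U - Lo by lra.
apply: le_trans (N3 g) _.
rewrite -/d; apply: ler_wpM2l; first by apply: ler0n.
rewrite !expr2; nra.
Qed.

Lemma sc_sub (H : vec -> R) (mu : R) (x h D : vec) : strongly_convex mu H -> subgrad H x h ->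
  H x - H D + mu / 4 * sqnorm (x - D) <= dotv h (x - D).
Proof.
move=> sc sg.
have hc := sc D x (1/2) (ltac:(apply/andP; split; lra)).
have := sg ((1/2) *: D + (1 - 1/2) *: x).
have -> : (1/2) *: D + (1 - 1/2) *: x - x = (- (1/2)) *: (x - D).
  by apply/rowP => j; rewrite !mxE; ring.
rewrite dotvZr (sqnormC D) in hc *.
move: hc; set A := H (_ + _); set q := sqnorm (x - D).
move=> hc h1.
have -> : mu / 4 * q = 2 * (mu / 2 * (1 / 2) * (1 - 1 / 2) * q) by field.
lra.
Qed.

Lemma avg_set (X : set vec) : convex_set_v X -> forall N (w : 'I_N.+1 -> vec),
  (forall i, X (w i)) -> X (N.+1%:R^-1 *: \sum_i w i).
Proof.
move=> cX; elim=> [|N IH] w hw.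
  by rewrite big_ord1 invr1 scale1r.
rewrite big_ord_recr /=.
set A := \sum_(i < N.+1) _.
have hA : X (N.+1%:R^-1 *: A) by apply: IH => i; apply: hw.
pose t : R := N.+1%:R / N.+2%:R.
have t0 : 0 <= t <= 1.
  apply/andP; split; first by apply: divr_ge0; apply: ler0n.
  by rewrite /t ler_pdivrMr ?ltr0n // mul1r ler_nat.
have -> : N.+2%:R^-1 *: (A + w ord_max) =
   t *: (N.+1%:R^-1 *: A) + (1 - t) *: w ord_max.
  apply/rowP => j; rewrite !mxE /t.
  have h1 : (N.+1%:R : R) != 0 by rewrite pnatr_eq0.
  have h2 : (N.+2%:R : R) != 0 by rewrite pnatr_eq0.
  field; have := ler0n R N; move=> hN.
  by apply/andP; split; apply: lt0r_neq0; lra.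
by apply: cX.
Qed.

Lemma avg_fun (phi : vec -> R) : convex_fun phi -> forall N (w : 'I_N.+1 -> vec),
  phi (N.+1%:R^-1 *: \sum_i w i) <= N.+1%:R^-1 * \sum_i phi (w i).
Proof.
move=> cf; elim=> [|N IH] w.
  by rewrite !big_ord1 invr1 scale1r mul1r.
rewrite big_ord_recr /= [X in _ <= _ * X]big_ord_recr /=.
set A := \sum_(i < N.+1) w (widen_ord _ i).
set PA := \sum_(i < N.+1) phi (w (widen_ord _ i)).
have hA : phi (N.+1%:R^-1 *: A) <= N.+1%:R^-1 * PA by apply: IH.
pose t : R := N.+1%:R / N.+2%:R.
have t0 : 0 <= t <= 1.
  apply/andP; split; first by apply: divr_ge0; apply: ler0n.
  by rewrite /t ler_pdivrMr ?ltr0n // mul1r ler_nat.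
have h1 : (N.+1%:R : R) != 0 by rewrite pnatr_eq0.
have h2 : (N.+2%:R : R) != 0 by rewrite pnatr_eq0.
have -> : N.+2%:R^-1 *: (A + w ord_max) =
   t *: (N.+1%:R^-1 *: A) + (1 - t) *: w ord_max.
  apply/rowP => j; rewrite !mxE /t.
  field; have := ler0n R N; move=> hN.
  by apply/andP; split; apply: lt0r_neq0; lra.
apply: le_trans (cf _ _ _ t0) _.
have -> : N.+2%:R^-1 * (PA + phi (w ord_max)) =
   t * (N.+1%:R^-1 * PA) + (1 - t) * phi (w ord_max).
  rewrite /t; field; have := ler0n R N; move=> hN.
  by apply/andP; split; apply: lt0r_neq0; lra.
move: t0 => /andP[t0 t1].
apply: lerD; last by [].
by apply: ler_wpM2l.
Qed.

Lemma sqnorm_convex (D : vec) : convex_fun (fun v : vec => sqnorm (v - D)).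
Proof.
move=> x y t /andP[t0 t1] /=.
have -> : t *: x + (1 - t) *: y - D = t *: (x - D) + (1 - t) *: (y - D).
  by apply/rowP => j; rewrite !mxE; ring.
rewrite (sqnormD (t *: (x - D))) !sqnormZ dotvZl dotvZr.
have := young (x - D) (y - D).
set a := sqnorm (x - D); set b := sqnorm (y - D); set c := dotv _ _.
move=> hy.
have : 0 <= t * (1 - t) by apply: mulr_ge0; lra.
nra.
Qed.

Lemma client (X : set vec) (fj : nat -> vec -> R) (y g : nat -> vec) (x0 h D : vec)
    (gam c L G : R) (N : nat) :
  convex_set_v X -> X x0 -> X D -> 0 <= gam -> 0 <= c -> 0 <= L -> 0 <= G ->
  sqnorm h <= G -> y 0%N = x0 ->
  (forall j, (j < N)%N -> subgrad (fj j) (y j) (g j) /\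
       is_proj X (y j - gam *: g j - c *: h) (y j.+1)) ->
  (forall j, (j < N)%N -> X (y j) -> sqnorm (g j) <= G) ->
  (forall j, (j < N)%N -> X (y j) -> fj j x0 - fj j (y j) <= L * `|x0 - y j|) ->
  forall j, (j <= N)%N ->
   [/\ X (y j),
    sqnorm (y j - x0) <= 4 ^+ j * (2 * gam ^+ 2 * G + 2 * c ^+ 2 * G) &
    sqnorm (y j - D) <= sqnorm (x0 - D) - 2 * gam * \sum_(l < j) (fj l x0 - fj l D)
        - 2 * j%:R * c * dotv h (x0 - D)
        + j%:R * (gam ^+ 2 * L ^+ 2 + c ^+ 2 * G + (2 * gam ^+ 2 * G + 2 * c ^+ 2 * G)
                  + 2 * (4 ^+ N * (2 * gam ^+ 2 * G + 2 * c ^+ 2 * G)))].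
Proof.
move=> cX Xx0 XD g0 c0 L0 G0 hG y0 Hs Hg HL.
set beta := 2 * gam ^+ 2 * G + 2 * c ^+ 2 * G.
have b0 : 0 <= beta by rewrite /beta; have := sqr_ge0 gam; have := sqr_ge0 c; nra.
have hbeta : beta = 2 * gam ^+ 2 * G + 2 * c ^+ 2 * G by [].
clearbody beta.
elim=> [|j IH] hj.
  rewrite y0 big_ord0; split => //; first by rewrite subrr sqnorm0 expr0 mul1r.
  rewrite mulr0n; lra.
have hjN : (j < N)%N by [].
have [Xj ej bj] := IH (ltnW hj).
have [sg pj] := Hs j hjN.
have gj := Hg j hjN Xj.
have Lj := HL j hjN Xj.
have Xj1 : X (y j.+1) by case: pj.
set z := y j - gam *: g j - c *: h.
have F4 : sqnorm (gam *: g j + c *: h) <= beta.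
  apply: le_trans (sqnormD2 _ _) _; rewrite !sqnormZ hbeta.
  have := sqr_ge0 gam; have := sqr_ge0 c; nra.
have step : sqnorm (y j.+1 - y j) <= beta.
  apply: le_trans (proj_le cX pj Xj) _.
  have -> : z - y j = - (gam *: g j + c *: h) by apply/rowP => k; rewrite !mxE /z; ring.
  by rewrite sqnormN.
have p4 : 1 <= (4 : R) ^+ j by apply: exprn_ege1; lra.
have p4N : (4 : R) ^+ j <= 4 ^+ N by apply: ler_weXn2l; [lra | apply: ltnW].
split => //.
  have -> : y j.+1 - x0 = (y j.+1 - y j) + (y j - x0) by apply/rowP => k; rewrite !mxE; ring.
  apply: le_trans (sqnormD2 _ _) _.
  rewrite exprS; nra.
have main : sqnorm (y j.+1 - D) <= sqnorm (y j - D)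
    - 2 * (gam * dotv (g j) (y j - D) + c * dotv h (x0 - D) + c * dotv h (y j - x0))
    + sqnorm (gam *: g j + c *: h).
  apply: le_trans (proj_le cX pj XD) _.
  have -> : z - D = (y j - D) - (gam *: g j + c *: h) by apply/rowP => k; rewrite !mxE /z; ring.
  have e1 : (x0 - D) + (y j - x0) = y j - D by apply/rowP => k; rewrite !mxE; ring.
  have E : dotv (y j - D) (gam *: g j + c *: h) =
     gam * dotv (g j) (y j - D) + c * dotv h (x0 - D) + c * dotv h (y j - x0).
    by rewrite -addrA -mulrDr -dotvDr e1 (dotvDr (y j - D) (gam *: g j)) !dotvZr !(dotvC (y j - D)).
  rewrite (sqnormB (y j - D)) E; lra.
have F1 : gam * (fj j (y j) - fj j D) <= gam * dotv (g j) (y j - D).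
  apply: ler_wpM2l => //; have := sg D.
  have -> : D - y j = - (y j - D) by rewrite opprB.
  rewrite dotvNr; lra.
have F2 : 2 * gam * (fj j x0 - fj j (y j)) <= gam ^+ 2 * L ^+ 2 + sqnorm (y j - x0).
  have h1 : gam * (fj j x0 - fj j (y j)) <= gam * (L * `|x0 - y j|) by apply: ler_wpM2l.
  have h2 : `|x0 - y j| ^+ 2 <= sqnorm (y j - x0) by rewrite sqnormC; apply: N2.
  have h3 := sqr_ge0 (gam * L - `|x0 - y j|).
  nra.
have F3 : - (c ^+ 2 * G + sqnorm (y j - x0)) <= 2 * (c * dotv h (y j - x0)).
  have := young' (c *: h) (y j - x0); rewrite sqnormZ dotvZl.
  have : c ^+ 2 * sqnorm h <= c ^+ 2 * G by apply: ler_wpM2l => //; apply: sqr_ge0.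
  lra.
have F5 : sqnorm (y j - x0) <= 4 ^+ N * beta.
  apply: le_trans ej _; apply: ler_wpM2r => //.
rewrite big_ord_recr /= -[j.+1]addn1 natrD.
move: bj main F1 F2 F3 F4 F5.
set S0 := \sum_(i < j) _.
set P := dotv h (x0 - D).
move=> bj main F1 F2 F3 F4 F5.
clearbody S0 P.
rewrite addn1; lra.
Qed.
End S.

Section Seq.
Variable R : realType.
Lemma tail_ge0 (t : nat -> R) K k : (forall j, (K <= j)%N -> 0 <= t j) ->
  0 <= \sum_(K <= j < k) t j.
Proof.
move=> h; rewrite big_nat_cond; apply: sumr_ge0 => j /andP[/andP[hj _] _].
exact: h.
Qed.

Lemma seq_lemma (a t : nat -> R) (K : nat) (delta : R) : 0 < delta ->
  (forall k, (K <= k)%N -> 0 <= t k <= 1) ->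
  (forall k, (K <= k)%N -> a k.+1 <= (1 - t k) * a k + t k * delta) ->
  (forall B, exists k0, forall k, (k0 <= k)%N -> B <= \sum_(K <= j < k) t j) ->
  exists k1, forall k, (k1 <= k)%N -> a k <= 2 * delta.
Proof.
move=> d0 ht ha hdiv.
pose P := Num.max (a K - delta) 0.
have P0 : 0 <= P by rewrite le_max lexx orbT.
have PK : a K - delta <= P by rewrite le_max lexx.
have t0 : forall j, (K <= j)%N -> 0 <= t j by move=> j /ht /andP[].
have claim : forall d, a (K + d)%N - delta <= P / (1 + \sum_(K <= j < K + d) t j).
  elim=> [|d IH].
    by rewrite addn0 big_geq // addr0 divr1.
  have hK : (K <= K + d)%N by apply: leq_addr.
  rewrite addnS big_nat_recr //=.
  have T0 := tail_ge0 (K + d)%N t0.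
  move: T0 IH; set T := \sum_(K <= j < K + d) t j => T0 IH.
  have /andP[tk0 tk1] := ht _ hK.
  have hrec := ha _ hK.
  set tk := t (K + d)%N in tk0 tk1 hrec *.
  have h1 : a (K + d).+1 - delta <= (1 - tk) * (a (K + d)%N - delta) by lra.
  apply: le_trans h1 _.
  have h2 : (1 - tk) * (a (K + d)%N - delta) <= (1 - tk) * (P / (1 + T)).
    by apply: ler_wpM2l => //; lra.
  apply: le_trans h2 _.
  have pT : 0 < 1 + T by lra.
  have pT' : 0 < 1 + (T + tk) by lra.
  rewrite mulrA ler_pdivrMr // mulrAC ler_pdivlMr //.
  have : (1 - tk) * (1 + (T + tk)) <= 1 + T by nra.
  move=> hh; have := ler_wpM2l P0 hh; lra.
have [k0 hk0] := hdiv (P / delta).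
exists (maxn k0 K) => k hk.
have hKk : (K <= k)%N by apply: leq_trans hk; apply: leq_maxr.
have hk0k : (k0 <= k)%N by apply: leq_trans hk; apply: leq_maxl.
have := claim (k - K)%N; rewrite subnKC //.
have := hk0 _ hk0k; set T := \sum_(K <= j < k) t j => hT.
have T0 : 0 <= T := tail_ge0 k t0.
have : P / (1 + T) <= delta.
  rewrite ler_pdivrMr; last by lra.
  have : P <= T * delta by move: hT; rewrite ler_pdivrMr.
  lra.
lra.
Qed.
End Seq.

Section E.
Variables (R : realType) (n : nat).
Notation vec := 'rV[R]_n.

Lemma inv_small (eta : R) : 0 < eta -> exists N : nat, forall k, (N <= k)%N -> k.+1%:R^-1 <= eta.
Proof.
move=> e0; exists (Num.Def.trunc (eta^-1)) => k hk.
have h := truncnS_gt (eta^-1).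
have h1 : eta^-1 <= k.+1%:R.
  apply: le_trans (ltW h) _; rewrite ler_nat; by [].
rewrite -[eta]invrK lef_pV2 ?posrE ?invr_gt0 ?ltr0n //.
Qed.

Lemma evt (X : set vec) (F H : vec -> R) (Fs Hs LF LH : R) : compact X ->
  0 <= LF -> 0 <= LH ->
  (forall x y, X x -> X y -> F y - F x <= LF * `|y - x|) ->
  (forall x y, X x -> X y -> H y - H x <= LH * `|y - x|) ->
  (forall z, X z -> F z <= Fs -> Hs <= H z) ->
  forall eps, 0 < eps -> exists2 delta, 0 < delta &
    forall z, X z -> F z - Fs <= delta -> Hs - eps <= H z.
Proof.
move=> cX LF0 LH0 lF lH opt eps e0.
case: (pselect (exists2 delta : R, 0 < delta &
    forall z, X z -> F z - Fs <= delta -> Hs - eps <= H z)) => // hno; exfalso.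
have hw : forall k : nat, exists z, X z /\ F z - Fs <= k.+1%:R^-1 /\ H z < Hs - eps.
  move=> k; case: (pselect (exists z, X z /\ F z - Fs <= k.+1%:R^-1 /\ H z < Hs - eps)) => // hk.
  exfalso; apply: hno; exists k.+1%:R^-1; first by rewrite invr_gt0 ltr0n.
  move=> z Xz hz; rewrite leNgt; apply/negP => hlt; apply: hk; exists z; split => //.
have [w hw'] := choice hw.
have hX : (w @ \oo) X by exists 0%N => // k _; exact: (hw' k).1.
have [p [Xp clp]] := cX (w @ \oo) _ hX.
have key : forall eta, 0 < eta -> F p <= Fs + eta /\ H p < Hs - eps + eta.
  move=> eta eta0.
  have [N hN] := inv_small (ltac:(by rewrite divr_gt0 // ltr0n) : 0 < eta / 2).
  pose r := eta / (2 * (1 + LF + LH)).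
  have r0 : 0 < r by rewrite /r divr_gt0 //; lra.
  have hA : (w @ \oo) [set z | X z /\ F z - Fs <= eta / 2 /\ H z < Hs - eps].
    exists N => // k hk /=.
    have [Xk [Fk Hk]] := hw' k.
    by split => //; split => //; apply: le_trans Fk (hN _ hk).
  have [q [[Xq [Fq Hq]] hb]] := clp _ _ hA (nbhsx_ballx p r r0).
  move: hb; rewrite mx_norm_ball /ball_ /= => hb.
  have h1 := lF q p Xq Xp.
  have h2 := lH q p Xq Xp.
  have hLr : LF * `|p - q| <= eta / 2.
    have : LF * `|p - q| <= LF * r by apply: ler_wpM2l => //; apply: ltW.
    have : LF * r <= eta / 2.
      rewrite /r mulrA ler_pdivrMr; last by lra.
      nra.
    lra.
  have hLr' : LH * `|p - q| <= eta / 2.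
    have : LH * `|p - q| <= LH * r by apply: ler_wpM2l => //; apply: ltW.
    have : LH * r <= eta / 2.
      rewrite /r mulrA ler_pdivrMr; last by lra.
      nra.
    lra.
  split; lra.
have Fp : F p <= Fs.
  rewrite leNgt; apply/negP => hlt.
  have := (key ((F p - Fs) / 2) (ltac:(by rewrite divr_gt0 // subr_gt0))).1.
  lra.
have := (key (eps / 2) (ltac:(by rewrite divr_gt0))).2.
have := opt p Xp Fp.
lra.
Qed.
End E.


Section Extra.
Variables (R : realType) (n : nat).
Notation vec := 'rV[R]_n.

Lemma convex_big (J : finType) (fs : J -> vec -> R) :
  (forall i, convex_fun (fs i)) -> convex_fun (fun v => \sum_i fs i v).
Proof.
move=> h x y t ht /=; rewrite !mulr_sumr -big_split; apply: ler_sum => i _.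
exact: h.
Qed.

Lemma sc_convex (mu : R) (H : vec -> R) : 0 <= mu -> strongly_convex mu H -> convex_fun H.
Proof.
move=> mu0 sc x y t ht; apply: le_trans (sc x y t ht) _.
move: ht => /andP[t0 t1].
have : 0 <= mu / 2 * t * (1 - t) * sqnorm (x - y).
  apply: mulr_ge0; last exact: sqnorm_ge0.
  apply: mulr_ge0; last lra.
  by apply: mulr_ge0 => //; apply: divr_ge0.
lra.
Qed.
End Extra.

Unset Implicit Arguments. Set Strict Implicit.

Theorem theorem1 (R : realType) (n S : nat) (I : 'I_S -> nat)
    (H : 'rV[R]_n -> R) (muH : R) (f : 'I_S -> nat -> 'rV[R]_n -> R)
    (X : set 'rV[R]_n) (xH : 'rV[R]_n)
    (gamma lambda : nat -> R) (x : nat -> 'rV[R]_n) :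
  (0 < S)%N -> (forall i, (0 < I i)%N) ->
  0 < muH -> strongly_convex muH H ->
  (forall i (j : nat), (j < I i)%N -> convex_fun (f i j)) ->
  X !=set0 -> compact X -> convex_set_v X ->
  bilevel_solution X (fun y => \sum_(i < S) \sum_(j < I i) f i j y) H xH ->
  (* (i) *)
  (forall k, 0 < gamma k) -> (forall k, 0 < lambda k) ->
  (forall k, gamma k.+1 <= gamma k) -> (forall k, lambda k.+1 <= lambda k) ->
  gamma 0%N * lambda 0%N * muH <= 2 * (\sum_(i < S) I i)%:R ->
  (* (ii) *)
  series (fun k => gamma k * lambda k) @ \oo --> +oo ->
  cvgn (series (fun k => (gamma k.+1 * lambda k.+1)^-1
                          * (1 - lambda k / lambda k.+1) ^+ 2)) ->
  cvgn (series (fun k => gamma k ^+ 2)) ->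
  (* (iii) *)
  (fun k => (gamma k.+1 ^+ 2 * lambda k.+1 ^+ 2)^-1
             * (1 - lambda k / lambda k.+1) ^+ 2) @ \oo --> 0 ->
  (fun k => gamma k / lambda k) @ \oo --> 0 ->
  lambda @ \oo --> 0 ->
  FISM_sequence I f H X gamma lambda x ->
  x @ \oo --> xH.
Proof.
destruct S as [|S']; first by [].
move=> _ I0 mu0 sc cf _ cX cvX bil g0 l0 gdec ldec _ hdiv _ _ _ hgl hl FISM.
move: FISM; rewrite /FISM_sequence /= => -[Hk [g [y HF]]].
set m := (\sum_(i < S'.+1) I i)%N.
move: bil => [[XxH Fopt] Hopt].
have [M0 [_ HM0]] := compact_bounded cX.
pose B0 := `|M0| + 1.
have XB : forall z, X z -> incube B0 z.
  move=> z Xz j; apply: le_trans (N1 z j) _.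
  have : M0 < B0 by rewrite /B0; have := ler_norm M0; lra.
  by move=> /HM0 /(_ z Xz).
have mpos : (0 < m)%N.
  by rewrite /m big_ord_recl; apply: leq_trans (I0 ord0) (leq_addr _ _).
have mR : (0 : R) < m%:R by rewrite ltr0n.
have SR : (0 : R) < S'.+1%:R by rewrite ltr0n.
have Iim : forall i, (I i <= m)%N by move=> i; rewrite /m (bigD1 i) //= leq_addr.
have cH : convex_fun H by apply: sc_convex sc; apply: ltW.
pose Fs := fun v => \sum_(i < S'.+1) \sum_(j < I i) f i j v.
have cF : convex_fun Fs.
  apply: convex_big => i; apply: convex_big => j; apply: cf; exact: ltn_ord.
have [LF [LF0 hLF]] := lip cF B0.
have [LH [LH0 hLH]] := lip cH B0.
have [GH [GH0 hGH]] := sg_bound cH B0.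
have [LoH hLoH] := cube_lb cH B0.
have hL : forall p : 'I_S'.+1 * nat, exists L : R, 0 <= L /\ ((p.2 < I p.1)%N ->
    forall u v, incube B0 u -> incube B0 v -> f p.1 p.2 v - f p.1 p.2 u <= L * `|v - u|).
  move=> [i j] /=; case: (ltnP j (I i)) => hj; last by exists 0; split.
  by have [L [L0 hL]] := lip (cf i j hj) B0; exists L; split.
have [Lf hLf] := choice hL.
have hG : forall p : 'I_S'.+1 * nat, exists G : R, 0 <= G /\ ((p.2 < I p.1)%N ->
    forall u g', incube B0 u -> subgrad (f p.1 p.2) u g' -> sqnorm g' <= G).
  move=> [i j] /=; case: (ltnP j (I i)) => hj; last by exists 0; split.
  by have [G [G0 hG]] := sg_bound (cf i j hj) B0; exists G; split.
have [Gf hGf] := choice hG.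
pose L := \big[Num.max/0]_(p : 'I_S'.+1 * 'I_m.+1) Lf (p.1, val p.2).
pose G := Num.max GH (\big[Num.max/0]_(p : 'I_S'.+1 * 'I_m.+1) Gf (p.1, val p.2)).
have L0 : 0 <= L by apply: bigmax_ge_id.
have G0 : 0 <= G by rewrite le_max GH0.
have GHG : GH <= G by rewrite le_max lexx.
have Lij : forall i j, (j < I i)%N -> Lf (i, j) <= L.
  move=> i j hj.
  have hj' : (j < m.+1)%N by apply: leq_trans (Iim i); apply: ltnW.
  exact: (le_bigmax 0 (fun p : 'I_S'.+1 * 'I_m.+1 => Lf (p.1, val p.2)) (i, Ordinal hj')).
have Gij : forall i j, (j < I i)%N -> Gf (i, j) <= G.
  move=> i j hj.
  have hj' : (j < m.+1)%N by apply: leq_trans (Iim i); apply: ltnW.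
  apply: le_trans (le_bigmax 0 (fun p : 'I_S'.+1 * 'I_m.+1 => Gf (p.1, val p.2)) (i, Ordinal hj')) _.
  by rewrite le_max lexx orbT.
have gle : forall k, gamma k <= gamma 0%N.
  by elim=> [|k IH] //; apply: le_trans (gdec k) IH.
have lle : forall k, lambda k <= lambda 0%N.
  by elim=> [|k IH] //; apply: le_trans (ldec k) IH.
have Xx : forall k, X (x k.+1).
  move=> k; have [_ [_ [hst hx]]] := HF k.
  rewrite hx; apply: (avg_set cvX) => i.
  have := I0 i; case hI: (I i) => [|j] // _.
  have [_ [Xp _]] := hst i j (ltac:(by rewrite hI)).
  exact: Xp.
pose kap := (lambda 0%N / m%:R) ^+ 2.
have kap0 : 0 <= kap by apply: sqr_ge0.
have kapE : kap = (lambda 0%N / m%:R) ^+ 2 by [].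
clearbody kap.
pose C0 := L ^+ 2 + kap * G + (2 * G + 2 * kap * G) + 2 * ((4 : R) ^+ m * (2 * G + 2 * kap * G)).
have C0E : C0 = L ^+ 2 + kap * G + (2 * G + 2 * kap * G) + 2 * ((4 : R) ^+ m * (2 * G + 2 * kap * G)) by [].
clearbody C0.
pose C := m%:R / S'.+1%:R * C0.
have CE : C = m%:R / S'.+1%:R * C0 by [].
clearbody C.
have rec : forall k, X (x k) ->
  sqnorm (x k.+1 - xH) <= sqnorm (x k - xH)
     - (2 * gamma k / S'.+1%:R) * (Fs (x k) - Fs xH)
     - (2 * gamma k * lambda k / S'.+1%:R) * dotv (Hk k) (x k - xH)
     + gamma k ^+ 2 * C.
  move=> k Xk; have [sgH [y0 [hst hx]]] := HF k.
  have gk0 := g0 k; have lk0 := l0 k.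
  pose c := gamma k * lambda k / m%:R.
  have c0 : 0 <= c by rewrite /c; apply: divr_ge0; [apply: mulr_ge0; apply: ltW|apply: ltW].
  have c2 : c ^+ 2 <= kap * gamma k ^+ 2.
    rewrite kapE -exprMn; apply: lerXn2r; rewrite ?nnegrE //.
      by apply: mulr_ge0; [apply: divr_ge0; [apply: ltW | apply: ltW] | apply: ltW].
    rewrite /c -mulrA [X in _ <= X]mulrC ler_pM2l // ler_pM2r ?invr_gt0 //.
  pose P := dotv (Hk k) (x k - xH).
  pose A := fun i : 'I_S'.+1 => \sum_(l < I i) (f i l (x k) - f i l xH).
  have hGk : sqnorm (Hk k) <= G by apply: le_trans GHG; apply: hGH (XB _ Xk) sgH.
  have hc : forall i, sqnorm (y k i (I i) - xH) <= sqnorm (x k - xH) + (- (2 * gamma k)) * A i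
         + (- (2 * c * P)) * (I i)%:R + (gamma k ^+ 2 * C0) * (I i)%:R.
    move=> i.
    have [_ _ h3] := @client R n X (f i) (y k i) (g k i) (x k) (Hk k) xH (gamma k) c L G (I i)
      cvX Xk XxH (ltW gk0) c0 L0 G0 hGk (y0 i) (hst i)
      (fun j hj Xj => le_trans ((hGf (i, j)).2 hj _ _ (XB _ Xj) ((hst i j hj).1)) (Gij i j hj))
      (fun j hj Xj => le_trans ((hLf (i, j)).2 hj _ _ (XB _ Xj) (XB _ Xk))
                        (ler_wpM2r (normr_ge0 _) (Lij i j hj)))
      (I i) (leqnn _).
    apply: le_trans h3 _.
    rewrite -/P -/(A i).
    have hE : gamma k ^+ 2 * L ^+ 2 + c ^+ 2 * G + (2 * gamma k ^+ 2 * G + 2 * c ^+ 2 * G)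
       + 2 * (4 ^+ I i * (2 * gamma k ^+ 2 * G + 2 * c ^+ 2 * G)) <= gamma k ^+ 2 * C0.
      rewrite C0E.
      have q1 : (4 : R) ^+ I i <= 4 ^+ m by apply: ler_weXn2l; [lra | apply: Iim].
      have q0 : (0 : R) <= 4 ^+ I i by apply: exprn_ge0; lra.
      have g2 := sqr_ge0 (gamma k).
      have e1 : c ^+ 2 * G <= kap * gamma k ^+ 2 * G by apply: ler_wpM2r.
      have e2 : 4 ^+ I i * (2 * gamma k ^+ 2 * G + 2 * c ^+ 2 * G) <=
                4 ^+ m * (2 * gamma k ^+ 2 * G + 2 * (kap * gamma k ^+ 2) * G).
        apply: ler_pM => //.
          have := sqr_ge0 c; nra.
        have : 0 <= G by []; nra.
      have : 0 <= L ^+ 2 by apply: sqr_ge0.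
      lra.
    have hI : (0 : R) <= (I i)%:R by apply: ler0n.
    have := ler_wpM2l hI hE.
    nra.
  rewrite hx.
  have h1 := avg_fun (sqnorm_convex xH) (fun i => y k i (I i)).
  apply: le_trans h1 _.
  have h2 : \sum_i sqnorm (y k i (I i) - xH) <= \sum_(i < S'.+1) (sqnorm (x k - xH)
      + (- (2 * gamma k)) * A i + (- (2 * c * P)) * (I i)%:R + (gamma k ^+ 2 * C0) * (I i)%:R).
    by apply: ler_sum => i _; exact: hc.
  rewrite !big_split /= sumr_const card_ord -!mulr_sumr -natr_sum -/m -mulr_natl in h2.
  have hA : \sum_i A i = Fs (x k) - Fs xH.
    by rewrite /A /Fs -sumrB; apply: eq_bigr => i _; rewrite sumrB.
  rewrite hA in h2.
  have h3 := ler_wpM2l (ltW (ltac:(by rewrite invr_gt0) : 0 < S'.+1%:R^-1)) h2.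
  apply: le_trans h3 _.
  rewrite /= CE /c /P.
  have mR0 : (m%:R : R) != 0 by rewrite lt0r_neq0.
  have SR0 : (S'.+1%:R : R) != 0 by rewrite lt0r_neq0.
  rewrite -[_ *+ S'.+1]mulr_natl le_eqVlt; apply/orP; left; apply/eqP.
  field; rewrite mR0 andbT; apply: lt0r_neq0; have := ler0n R S'; lra.
have C00 : 0 <= C0.
  rewrite C0E; have := sqr_ge0 L; have : 0 <= (4 : R) ^+ m by apply: exprn_ge0; lra.
  move=> h4 hL2; have h5 : 0 <= 2 * G + 2 * kap * G by have := mulr_ge0 kap0 G0; lra.
  have := mulr_ge0 h4 h5; have := mulr_ge0 kap0 G0; lra.
have C_0 : 0 <= C by rewrite CE; apply: mulr_ge0 => //; apply: divr_ge0; apply: ltW.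
have lipF : forall u v, X u -> X v -> Fs v - Fs u <= LF * `|v - u|.
  by move=> u v Xu Xv; apply: hLF; apply: XB.
have lipH : forall u v, X u -> X v -> H v - H u <= LH * `|v - u|.
  by move=> u v Xu Xv; apply: hLH; apply: XB.
have opt : forall z, X z -> Fs z <= Fs xH -> H xH <= H z.
  move=> z Xz hz; apply: Hopt; split => // w Xw; apply: le_trans hz _; exact: Fopt.
have ev_lam : forall e, 0 < e -> exists N, forall k, (N <= k)%N -> lambda k < e.
  move=> e e0; have := (cvgrPdist_lt _ _).1 hl e e0 => -[N _ hN].
  exists N => k hk; have := hN k hk; rewrite sub0r normrN ger0_norm //; exact: ltW.
have ev_gl : forall e, 0 < e -> exists N, forall k, (N <= k)%N -> gamma k / lambda k < e.
  move=> e e0; have := (cvgrPdist_lt _ _).1 hgl e e0 => -[N _ hN].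
  exists N => k hk; have := hN k hk; rewrite sub0r normrN ger0_norm //.
  by apply: divr_ge0; apply: ltW.
have conv : forall eta, 0 < eta -> exists K, forall k, (K <= k)%N -> sqnorm (x k - xH) <= eta.
  move=> eta et0.
  pose epsE := muH * eta / 16.
  have epsE0 : 0 < epsE by rewrite /epsE; apply: divr_gt0 => //; apply: mulr_gt0.
  have [del del0 hdel] := evt cX LF0 LH0 lipF lipH opt epsE0.
  pose D0 := `|H xH - LoH| + 1.
  have D00 : 0 < D0 by rewrite /D0; have := normr_ge0 (H xH - LoH); lra.
  have [N1 hN1] := ev_lam (del / D0) (divr_gt0 del0 D00).
  have hs0 : 0 < 2 * S'.+1%:R / (gamma 0%N * muH + 1).
    apply: divr_gt0; first lra.
    have := mulr_gt0 (g0 0%N) mu0; lra.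
  have [N2 hN2] := ev_lam _ hs0.
  pose rg := muH * eta / (8 * S'.+1%:R * (C + 1)).
  have rg0 : 0 < rg by rewrite /rg; apply: divr_gt0; [apply: mulr_gt0 | apply: mulr_gt0; lra].
  have [N3 hN3] := ev_gl _ rg0.
  pose K := maxn (maxn N1 N2) (maxn N3 1).
  pose t := fun k => muH / (2 * S'.+1%:R) * (gamma k * lambda k).
  have hK1 : forall k, (K <= k)%N -> [/\ (N1 <= k)%N, (N2 <= k)%N, (N3 <= k)%N & (1 <= k)%N].
    move=> k hk; rewrite !geq_max in hk; case/andP: hk => /andP[-> ->] /andP[-> ->]; by [].
  have := @seq_lemma R (fun k => sqnorm (x k - xH)) t K (eta / 2) (ltac:(by apply: divr_gt0)).
  have tE : forall k, t k = muH / (2 * S'.+1%:R) * (gamma k * lambda k) by [].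
  clearbody t.
  case.
  - move=> k hk; have [_ h2 _ _] := hK1 k hk.
    have hl2 : lambda k * (gamma 0%N * muH + 1) < 2 * S'.+1%:R.
      by rewrite -ltr_pdivlMr; [apply: hN2 | have := mulr_gt0 (g0 0%N) mu0; lra].
    have gk := gle k; have lk := l0 k; have gk0 := g0 k.
    have e1 : gamma k * lambda k * muH <= gamma 0%N * lambda k * muH.
      by apply: ler_wpM2r; [apply: ltW | apply: ler_wpM2r => //; apply: ltW].
    rewrite tE; apply/andP; split.
      apply: mulr_ge0; first by apply: divr_ge0; [apply: ltW | lra].
      by apply: mulr_ge0; apply: ltW.
    rewrite mulrAC ler_pdivrMr; last lra.
    nra.
  - move=> k hk; have [h1 _ h3 hk1] := hK1 k hk.
    have Xk : X (x k) by case: k hk1 {hk h1 h3} => // k' _; exact: Xx.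
    have hr := rec k Xk.
    have sgk : subgrad H (x k) (Hk k) by have [] := HF k.
    have hsc := @sc_sub R n H muH (x k) (Hk k) xH sc sgk.
    have Fd0 : 0 <= Fs (x k) - Fs xH by rewrite subr_ge0; apply: Fopt.
    have gk0 := g0 k; have lk0 := l0 k.
    have Q : - (lambda k * epsE) <= Fs (x k) - Fs xH + lambda k * (H (x k) - H xH).
      case: (lerP (Fs (x k) - Fs xH) del) => hd.
        have := hdel (x k) Xk hd => hh.
        have : lambda k * (- epsE) <= lambda k * (H (x k) - H xH).
          by apply: ler_wpM2l; [apply: ltW | lra].
        lra.
      have hl1 : lambda k * D0 < del by rewrite -ltr_pdivlMr //; apply: hN1.
      have hLo := hLoH _ (XB _ Xk).
      have : - D0 <= H (x k) - H xH.
        by rewrite /D0; have := ler_norm (H xH - LoH); lra.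
      move=> hD; have : lambda k * (- D0) <= lambda k * (H (x k) - H xH).
        by apply: ler_wpM2l => //; apply: ltW.
      have : 0 <= lambda k * epsE by apply: mulr_ge0; apply: ltW.
      lra.
    have pos1 : 0 <= 2 * gamma k * lambda k / S'.+1%:R.
      by apply: divr_ge0; [apply: mulr_ge0; [apply: mulr_ge0; [lra|]|]; apply: ltW | apply: ltW].
    have pos2 : 0 <= 2 * gamma k / S'.+1%:R.
      by apply: divr_ge0; [apply: mulr_ge0; [lra|]; apply: ltW | apply: ltW].
    have M1 := ler_wpM2l pos1 hsc.
    have M2 := ler_wpM2l pos2 Q.
    have e1 : gamma k < rg * lambda k by rewrite -ltr_pdivrMr //; apply: hN3.
    have e3 : gamma k * C <= rg * lambda k * C by apply: ler_wpM2r => //; apply: ltW.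
    have e4 : gamma k * (gamma k * C) <= gamma k * (rg * lambda k * C).
      by apply: ler_wpM2l => //; apply: ltW.
    have e5 : gamma k * (rg * lambda k * C) <= t k * (eta / 4).
      have -> : gamma k * (rg * lambda k * C) = rg * C * (gamma k * lambda k) by ring.
      have -> : t k * (eta / 4) = rg * (C + 1) * (gamma k * lambda k).
        rewrite tE /rg; field; apply/andP; split; last lra.
        by apply: lt0r_neq0; have := ler0n R S'; lra.
      apply: ler_wpM2r; first by apply: mulr_ge0; apply: ltW.
      by apply: ler_wpM2l; [apply: ltW | lra].
    have I1 : 2 * gamma k * lambda k / S'.+1%:R * (muH / 4 * sqnorm (x k - xH))
        = t k * sqnorm (x k - xH).
      rewrite tE; field; by apply: lt0r_neq0; have := ler0n R S'; lra.
    have I2 : 2 * gamma k / S'.+1%:R * (lambda k * epsE) = t k * (eta / 4).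
      rewrite tE /epsE; field; by apply: lt0r_neq0; have := ler0n R S'; lra.
    move: hr M1 M2 e4 e5 I1 I2 => /=.
    set a := sqnorm (x k - xH); set a' := sqnorm (x k.+1 - xH).
    set P := dotv (Hk k) (x k - xH).
    clearbody a a' P.
    move=> hr M1 M2 e4 e5 I1 I2.
    have E5 : gamma k ^+ 2 * C = gamma k * (gamma k * C) by rewrite expr2 mulrA.
    move: hr M1 M2 e4 e5 I1 I2 E5; move: (S'.+1%:R) => sR hr M1 M2 e4 e5 I1 I2 E5.
    lra.
  - move=> B.
    have := (cvgryPge _).1 hdiv (B * (2 * S'.+1%:R / muH) + series (fun k => gamma k * lambda k) K).
    move=> -[k0 _ hk0]; exists (maxn k0 K) => k hk.
    have hKk : (K <= k)%N by apply: leq_trans hk; apply: leq_maxr.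
    have := hk0 k (leq_trans (leq_maxl _ _) hk).
    rewrite /series /= (big_cat_nat (leq0n K) hKk) /=.
    have -> : \sum_(K <= j < k) t j = muH / (2 * S'.+1%:R) * \sum_(K <= j < k) (gamma j * lambda j).
      by rewrite mulr_sumr; apply: eq_bigr => j _; rewrite tE.
    set T := \sum_(K <= j < k) _.
    move=> hT.
    have hT' : B * (2 * S'.+1%:R / muH) <= T by move: hT; rewrite [X in X <= _]addrC lerD2l.
    have w0 : 0 <= muH / (2 * S'.+1%:R) by apply: divr_ge0; [apply: ltW | lra].
    have := ler_wpM2l w0 hT'.
    have -> : muH / (2 * S'.+1%:R) * (B * (2 * S'.+1%:R / muH)) = B.
      field; apply/andP; split; first by apply: lt0r_neq0.
      by apply: lt0r_neq0; have := ler0n R S'; lra.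
    by [].
  - move=> k1 hk1; exists k1 => k hk; have := hk1 k hk; lra.
apply/cvgrPdist_lt => eps e0.
have [K hK] := conv (eps ^+ 2 / 4) (ltac:(by apply: divr_gt0; [apply: exprn_gt0|])).
exists K => // k hk.
have : `|xH - x k| <= eps / 2.
  apply: N4; first by apply: divr_ge0; [apply: ltW|].
  move=> j; have := coord_le (xH - x k) j; rewrite sqnormC => hj.
  have := le_trans hj (hK k hk).
  rewrite -real_normK ?num_real // => hh.
  have := normr_ge0 ((xH - x k) ord0 j); nra.
lra.
Qed.
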